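(* Let $X$ be an infinite-dimensional separable (real or complex) Banach space and let $A$ be an operator in $X$ satisfying all hypotheses of Theorem 2.1: $A$ is densely defined, $A^r$ is closed for all $r\ge1$, and there are a dense set $X_0\subset\bigcap_n D(A^n)$ and $B:X_0\to X_0$ with $ABx=x$, and $\sum_{n\ge1}A^nx$, $\sum_{n\ge1}B^nx$ unconditionally convergent for all $x\in X_0$. If $A$ is injective and $A^{-1}$ is a bounded linear operator on $X$, then $A^{-1}$ is frequently hypercyclic.
   Context: A series $\sum_k x_k$ converges unconditionally if for every $\varepsilon>0$ there is $N$ with $\|\sum_{k\in F}x_k\|<\varepsilon$ for every finite $F\subset\mathbb{N}$ disjoint from $\{1,\dots,N\}$. An operator $T$ is frequently hypercyclic if there is $f\in D(T)$ with $T^nf\in D(T)$ for all $n\ge1$ such that for every non-empty open $U\subset X$ the set $\{n: T^nf\in U\}$ has positive lower density, where the lower density of $E\subset\mathbb{N}$ is $\liminf_{N}\#(E\cap\{1,\dots,N\})/N$. *)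

(* Defs.v *)
From HB Require Import structures.
From mathcomp Require Import all_boot all_order all_algebra.
From mathcomp Require Import all_classical all_reals all_analysis.
From mathcomp.real_closed Require Import complex.
Import Order.TTheory GRing.Theory Num.Theory.
Import numFieldNormedType.Exports.

Set Implicit Arguments.
Unset Strict Implicit.
Unset Printing Implicit Defensive.

Local Open Scope classical_set_scope.
Local Open Scope ring_scope.

Definition scal (R : realType) (b : bool) : numFieldType :=
  if b then (complex R : numFieldType) else (R : numFieldType).

Section Defs.
Variables (K : numFieldType) (X : normedModType K).

Definition separable_space : Prop :=
  exists S : set X, countable S /\ dense S.

Definition infinite_dimensional : Prop :=
  ~ exists s : seq X, forall x : X,
      exists c : nat -> K, x = \sum_(i < size s) c i *: s`_i.

(* A (possibly unbounded) linear operator in X: a linear subspace D = D(A)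
   and a map A, linear on D (values of A outside D are irrelevant). *)
Definition linear_operator (D : set X) (A : X -> X) : Prop :=
  [/\ D 0,
      (forall x y, D x -> D y -> D (x + y) /\ A (x + y) = A x + A y) &
      (forall (a : K) x, D x -> D (a *: x) /\ A (a *: x) = a *: A x)].

Definition dom_pow (D : set X) (A : X -> X) (n : nat) : set X :=
  [set x | forall k, (k < n)%N -> D (iter k A x)].

Definition closed_operator (D : set X) (A : X -> X) : Prop :=
  closed [set p : X * X | D p.1 /\ A p.1 = p.2].

(* Unconditional convergence of sum_{k >= 1} u k (Cauchy form, as in the
   paper): finite sets F of indices are given by duplicate-free lists. *)
Definition uncond_conv (u : nat -> X) : Prop :=
  forall eps : K, 0 < eps -> exists N : nat,
    forall s : seq nat, uniq s -> all (fun k => (N < k)%N) s ->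
      `| \sum_(k <- s) u k | < eps.

End Defs.

Definition lower_density (R : realType) (E : set nat) : \bar R :=
  limn_einf (fun N : nat =>
    (((\sum_(1 <= n < N.+1) (`[< E n >] : nat))%N)%:R / N%:R : R)%:E).

Definition freq_hypercyclic (R : realType) (K : numFieldType)
    (X : normedModType K) (D : set X) (T : X -> X) : Prop :=
  exists f : X, D f /\ (forall n, (1 <= n)%N -> D (iter n T f)) /\
    forall U : set X, open U -> U !=set0 ->
      (0 < lower_density R [set n | U (iter n T f)])%E.

(* Main.v *)
Require Import Defs.
From HB Require Import structures.
From mathcomp Require Import all_boot all_order all_algebra.
From mathcomp Require Import all_classical all_reals all_analysis.
From mathcomp.real_closed Require Import complex.
From mathcomp Require Import zify ring lra.
Import Order.TTheory GRing.Theory Num.Theory.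
Import numFieldNormedType.Exports.
Local Open Scope classical_set_scope.
Local Open Scope ring_scope.
Lemma dens_pos (R : realType) (E : set nat) (c N0 : nat) :
  (0 < c)%N ->
  (forall N, (N0 <= N)%N ->
     (N <= c * (\sum_(1 <= n < N.+1) (`[< E n >] : nat)))%N) ->
  (0 < lower_density R E)%E.
Proof.
move=> c0 H; rewrite /lower_density limn_einf_lim.
set u := (fun N : nat => _).
have -> : limn (einfs u) = ereal_sup (range (einfs u)).
  apply: cvg_lim => //; apply: ereal_nondecreasing_cvgn; exact: nondecreasing_einfs.
apply: (@lt_le_trans _ _ ((c%:R : R)^-1)%:E).
  by rewrite lte_fin invr_gt0 ltr0n.
apply: (@le_trans _ _ (einfs u (N0.+1))); last first.
  by apply: ereal_sup_ubound; exists N0.+1.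
rewrite /einfs /=; apply/ereal_infP => _ [k /= Hk <-].
rewrite /u lee_fin.
have Hk1 : (0 < k)%N by apply: leq_ltn_trans Hk.
have := H k (ltnW Hk) => Hc.
rewrite ler_pdivlMr ?ltr0n // mulrC ler_pdivrMr ?ltr0n // -natrM ler_nat.
by rewrite mulnC.
Qed.
Section NatAux.
Local Open Scope nat_scope.
Lemma dvd_mod_eq d r L : r < d -> (d %| L + (d - r)) = (L %% d == r).
Proof.
move=> rd; have d0 : 0 < d by lia.
rewrite /dvdn -modnDml.
have xd := ltn_pmod L d0; move: (L %% d) xd => x xd.
case: (ltnP x r) => xr.
  rewrite modn_small; last lia.
  apply/idP/idP; move/eqP; lia.
rewrite (_ : x + (d - r) = (x - r) + d); last lia.
rewrite modnDr modn_small; last lia.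
apply/idP/idP; move/eqP; lia.
Qed.

Lemma cnt_mod d r L : r < d -> \sum_(n < L) (n %% d == r) = (L + (d - 1 - r)) %/ d.
Proof.
move=> rd; elim: L => [|L IH].
  by rewrite big_ord0 add0n divn_small //; lia.
rewrite big_ord_recr /= IH (_ : L.+1 + (d - 1 - r) = (L + (d - 1 - r)).+1); last lia.
rewrite divnS; last lia.
rewrite (_ : (L + (d - 1 - r)).+1 = L + (d - r)); last lia.
by rewrite dvd_mod_eq // addnC.
Qed.

Lemma cnt_near m b L : \sum_(n < L) (n - m + (m - n) <= b) <= 2 * b + 1.
Proof.
suff : \sum_(n < L) (n - m + (m - n) <= b) = minn L (m + b + 1) - minn L (m - b) by lia.
elim: L => [|L IH]; first by rewrite big_ord0; lia.
rewrite big_ord_recr /= IH.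
case: (leqP (L - m + (m - L)) b) => H /=; lia.
Qed.

Lemma geo_nat K N (y : nat -> nat) : (forall k, k < K -> 2 ^ k.+1 * y k <= N) ->
  \sum_(k < K) y k <= N.
Proof.
move=> H.
suff : 2 ^ K * \sum_(k < K) y k + N <= 2 ^ K * N.
  have : 0 < 2 ^ K by rewrite expn_gt0.
  nia.
elim: K H => [|K IH] H; first by rewrite big_ord0; lia.
rewrite big_ord_recr /= expnS.
have := IH (fun k kK => H k (ltnW kK)).
have := H K (ltnSn K); rewrite expnS.
move: (2 ^ K) (\sum_(i < K) y i) (y K) => e S z; nia.
Qed.
End NatAux.
Section Comb.
Local Open Scope nat_scope.
Variable a : nat -> nat.

Fixpoint P k := if k is k'.+1 then 2 ^ (k' + 5) * (2 * a k'.+1 + 1) * P k'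
  else 16 * (2 * a 0 + 1).

Lemma P_pos k : 0 < P k.
Proof. elim: k => [|k IH] /=; rewrite ?muln_gt0 ?expn_gt0 ?IH; lia. Qed.

Lemma P_big k : 2 ^ (k + 4) * (2 * a k + 1) <= P k.
Proof.
case: k => [|k] //=; rewrite (_ : k.+1 + 4 = k + 5); last lia.
by rewrite -[X in X <= _]muln1 leq_mul2l P_pos orbT.
Qed.

Lemma P_ge k : 2 * a k + k + 1 <= P k.
Proof.
apply: leq_trans (P_big k).
have : k + 4 < 2 ^ (k + 4) by apply: ltn_expl.
nia.
Qed.

Lemma P_mono j k : j <= k -> P j <= P k.
Proof.
elim: k => [|k IH]; first by rewrite leqn0 => /eqP ->.
rewrite leq_eqVlt => /orP [/eqP -> //|/IH Hj] /=.
apply: leq_trans Hj _; rewrite -[X in X <= _]mul1n leq_mul2r; apply/orP; right.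
rewrite muln_gt0 expn_gt0; lia.
Qed.

Lemma P_grow j k : j < k -> 2 ^ (k + 4) * (2 * a k + 1) * P j <= P k.
Proof.
case: k => [//|k] Hj /=; rewrite (_ : k.+1 + 4 = k + 5); last lia.
rewrite leq_mul2l; apply/orP; right; exact: P_mono.
Qed.

Lemma P_dvd2 j k : j < k -> 2 * P j %| P k.
Proof.
elim: k => [//|k IH]; rewrite ltnS leq_eqVlt => /orP [/eqP ->|/IH H] /=.
  by apply: dvdn_mul => //; apply: dvdn_mulr; rewrite addnS expnS dvdn_mulr.
by apply: dvdn_trans H _; apply: dvdn_mull.
Qed.

Definition A k n := n %% (2 * P k) == P k.

Lemma A_ge k n : A k n -> P k <= n.
Proof. by move/eqP <-; apply: leq_mod. Qed.

Lemma A_dvd k n : A k n -> P k %| n.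
Proof.
move=> /eqP H; rewrite (divn_eq n (2 * P k)) H dvdn_add //.
by rewrite mulnA dvdn_mull.
Qed.

Lemma A_disj j k n : j < k -> A j n -> A k n -> False.
Proof.
move=> jk Aj Ak.
have : 2 * P j %| n by apply: dvdn_trans (P_dvd2 _ _ jk) (A_dvd _ _ Ak).
move: Aj; rewrite /A /dvdn => /eqP ->; have := P_pos j; lia.
Qed.

Definition dist n m := n - m + (m - n).

Lemma dvd_dist d n m : d %| n -> d %| m -> n != m -> d <= dist n m.
Proof.
move=> dn dm nm; rewrite /dist.
have [lt|lt|E] := ltngtP n m; last by rewrite E eqxx in nm.
  rewrite (_ : n - m = 0); last lia.
  by rewrite add0n dvdn_leq ?subn_gt0 // dvdn_sub.
rewrite (_ : m - n = 0); last lia.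
by rewrite addn0 dvdn_leq ?subn_gt0 // dvdn_sub.
Qed.

Lemma A_sep_same k n m : A k n -> A k m -> n != m -> 2 * P k <= dist n m.
Proof.
move=> /eqP An /eqP Am nm; rewrite /dist.
have [lt|lt|E] := ltngtP n m; last by rewrite E eqxx in nm.
  have : m == n %[mod 2 * P k] by rewrite An Am.
  rewrite eqn_mod_dvd ?(ltnW lt) // => H.
  rewrite (_ : n - m = 0); last lia.
  by rewrite add0n dvdn_leq ?subn_gt0.
have : n == m %[mod 2 * P k] by rewrite An Am.
rewrite eqn_mod_dvd ?(ltnW lt) // => H.
rewrite (_ : m - n = 0); last lia.
by rewrite addn0 dvdn_leq ?subn_gt0.
Qed.

Lemma A_sep_lt j k n m : j < k -> A j n -> A k m -> P j <= dist n m.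
Proof.
move=> jk Aj Ak; apply: dvd_dist; first exact: A_dvd.
  apply: dvdn_trans (A_dvd _ _ Ak); apply: dvdn_trans (P_dvd2 _ _ jk); exact: dvdn_mull.
by apply/eqP => E; subst; apply: (A_disj _ _ _ jk Aj Ak).
Qed.

Definition Bset j n := A j n /\ forall k m, j < k -> A k m -> a k < dist n m.

Lemma B_lt j n : Bset j n -> a j < n /\ j < n.
Proof. move=> [/A_ge H _]; have := P_ge j; lia. Qed.

Lemma B_disj j k n : Bset j n -> Bset k n -> j = k.
Proof.
move=> [Aj _] [Ak _]; case: (ltngtP j k) => // jk; exfalso.
  exact: (A_disj _ _ _ jk Aj Ak).
exact: (A_disj _ _ _ jk Ak Aj).
Qed.

Lemma B_sep l j n m : Bset l n -> Bset j m -> n != m -> a l < dist n m /\ a j < dist n m.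
Proof.
move=> [Al Bl] [Aj Bj] nm; case: (ltngtP l j) => [lj|jl|E].
- split; last by apply: Bl.
  have := A_sep_lt _ _ _ _ lj Al Aj; have := P_ge l; lia.
- split; first by rewrite /dist addnC; apply: Bj.
  have := A_sep_lt _ _ _ _ jl Aj Al; have := P_ge j; rewrite /dist; lia.
- subst; have := A_sep_same _ _ _ Al Aj nm; have := P_ge j; lia.
Qed.


Lemma cntA k M : \sum_(n < M.+1) A k n = (M + P k) %/ (2 * P k).
Proof.
have := P_pos k => Pk.
rewrite (cnt_mod _ _ _ (_ : P k < 2 * P k)); last lia.
congr (_ %/ _); lia.
Qed.

Lemma bad_bound j k N : 2 ^ k.+1 *
  (4 * P j * ((j < k) * ((2 * a k + 1) * \sum_(m < (N + a k).+1) A k m))) <= N.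
Proof.
case: (ltnP j k) => jk; last by rewrite /= !muln0.
rewrite mul1n cntA.
have := leq_trunc_div (N + a k + P k) (2 * P k).
move: ((N + a k + P k) %/ (2 * P k)) => b Hb.
have Pg := P_grow _ _ jk; have Pge := P_ge k; have Pj := P_pos j.
case: b Hb => [|b] Hb; first by rewrite !muln0.
have e4 : 2 ^ (k + 4) = 2 ^ k.+1 * 8 by rewrite (_ : k + 4 = k.+1 + 3) ?expnD //; lia.
rewrite e4 in Pg.
move: (2 ^ k.+1) Pg => t Pg.
have h1 : P k * b.+1 <= 2 * N by nia.
have h2 : t * 8 * (2 * a k + 1) * P j * b.+1 <= P k * b.+1 by rewrite leq_mul2r Pg orbT.
move: (t * (2 * a k + 1) * P j * b.+1) (P k * b.+1) => u v.
nia.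
Qed.

Lemma point_bad j N n : n < N.+1 -> A j n <=
  `[< Bset j n >] + \sum_(k < N) \sum_(m < (N + a k).+1)
       ((j < k) && A k m && (n - m + (m - n) <= a k)).
Proof.
move=> nN; case Aj: (A j n) => //.
case: (pselect (Bset j n)) => hB; first by rewrite asboolT.
rewrite asboolF // add0n.
have [k [m [jk [Akm le]]]] : exists k m, j < k /\ A k m /\ n - m + (m - n) <= a k.
  apply: contrapT => nex; apply: hB; split; first by rewrite Aj.
  move=> k m jk Akm; rewrite ltnNge; apply/negP => le; apply: nex.
  by exists k, m.
have := A_ge _ _ Akm; have := P_ge k => Pge Pkm.
have kN : k < N by lia.
have mN : m < (N + a k).+1 by lia.
rewrite (bigD1 (Ordinal kN)) //= (bigD1 (Ordinal mN)) //= jk Akm le /=.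
lia.
Qed.

Lemma B_dens j N : 4 * P j <= N ->
  N <= 8 * P j * \sum_(1 <= n < N.+1) (`[< Bset j n >] : nat).
Proof.
move=> HN.
have -> : \sum_(1 <= n < N.+1) (`[< Bset j n >] : nat) =
          \sum_(n < N.+1) (`[< Bset j n >] : nat).
  rewrite big_ord_recl /= asboolF ?add0n; last by move=> /B_lt [_]; lia.
  rewrite big_add1 /= big_mkord; apply: eq_bigr => i _.
  by rewrite /bump /= add1n.
set S := \sum_(n < N.+1) _.
set bad := \sum_(k < N) (4 * P j * ((j < k) * ((2 * a k + 1) *
             \sum_(m < (N + a k).+1) A k m))).
have h2 : bad <= N.
  apply: (@geo_nat N N (fun k => 4 * P j * ((j < k) * ((2 * a k + 1) *
             \sum_(m < (N + a k).+1) A k m)))) => k _; exact: bad_bound.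
have h3 : \sum_(n < N.+1) A j n <= S + \sum_(k < N) ((j < k) * ((2 * a k + 1) *
             \sum_(m < (N + a k).+1) A k m)).
  apply: (@leq_trans (\sum_(n < N.+1) (`[< Bset j n >] + \sum_(k < N) \sum_(m < (N + a k).+1)
       ((j < k) && A k m && (n - m + (m - n) <= a k))))).
    by apply: leq_sum => n _; apply: point_bad.
  rewrite big_split /= leq_add2l exchange_big /=; apply: leq_sum => k _.
  rewrite exchange_big /= big_distrr /= big_distrr /=; apply: leq_sum => m _.
  case: (j < k) (A k m) => [] [] /=; rewrite ?mul0n ?mul1n ?muln0 ?muln1;
    try by rewrite big1.
  exact: (cnt_near m (a k) N.+1).
rewrite cntA in h3.
have h1 : N + P j < ((N + P j) %/ (2 * P j)).+1 * (2 * P j).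
  by apply: ltn_ceil; rewrite muln_gt0 P_pos.
have h2' : 4 * P j * \sum_(k < N) ((j < k) * ((2 * a k + 1) *
             \sum_(m < (N + a k).+1) A k m)) <= N by rewrite big_distrr.
move: h2' h3 h1.
move: (\sum_(k < N) _) => x.
move: ((N + P j) %/ (2 * P j)) => al.
have := P_pos j.
move: (P j) HN => p; rewrite -/S.
move: S => s => g1 h3 g2 hp hN.
have := leq_mul (leqnn (8 * p)) h3.
nia.
Qed.
End Comb.

Section Core.
Variables (K : numFieldType) (X : completeNormedModType K).
Variable (T : {linear X -> X}).
Hypothesis Tc : continuous T.
Variables (G H : nat -> nat -> X).
Hypothesis hGT : forall i k, T (G i k.+1) = G i k.
Hypothesis hHT : forall i k, T (H i k) = H i k.+1.
Hypothesis hGH0 : forall i, G i 0 = H i 0.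

Lemma iterT_sum n (I : Type) (r : seq I) (P : pred I) (F : I -> X) :
  iter n T (\sum_(i <- r | P i) F i) = \sum_(i <- r | P i) iter n T (F i).
Proof.
elim: n => [//|n IH] /=; by rewrite IH linear_sum.
Qed.

Lemma iterT0 n : iter n T 0 = 0.
Proof. elim: n => [//|n IH] /=; by rewrite IH linear0. Qed.

Lemma iterT_cont n : continuous (iter n T).
Proof.
elim: n => [|n IH] /=; first by move=> x.
move=> x; apply: continuous_comp; [exact: IH | exact: Tc].
Qed.

Lemma iterT_G n j m :
  iter n T (G j m) = if (n <= m)%N then G j (m - n) else H j (n - m).
Proof.
elim: n => [|n IH]; first by rewrite /= subn0.
rewrite iterS IH; case: (ltngtP n m) => nm.
- rewrite (_ : (m - n = (m - n.+1).+1)%N); last lia.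
  by rewrite hGT.
- rewrite hHT; congr (H j _); lia.
- by rewrite nm subnn hGH0 hHT subSnn.
Qed.

Variable c : nat -> option nat.

Lemma group (F : nat -> nat -> X) (r : seq nat) Q :
  (forall m j, m \in r -> c m = Some j -> (j < Q)%N) ->
  \sum_(m <- r) (if c m is Some j then F j m else 0) =
  \sum_(j < Q) \sum_(m <- r | c m == Some (j : nat)) F j m.
Proof.
move=> hQ.
rewrite (eq_bigr (fun j : 'I_Q => \sum_(m <- r)
   (if c m == Some (j : nat) then F j m else 0))); last first.
  by move=> j _; rewrite big_mkcond.
rewrite exchange_big /= [LHS]big_seq_cond [RHS]big_seq_cond.
apply: eq_bigr => m /andP [mr _].
case E: (c m) => [j|]; last by rewrite big1.
have jQ := hQ m j mr E.
rewrite (bigD1 (Ordinal jQ)) //= eqxx big1 ?addr0 // => i ij.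
case: eqP => // [[ji]]; exfalso; move/eqP: ij; apply; apply: val_inj => /=.
by rewrite ji.
Qed.

Variable eps : nat -> K.
Hypothesis eps_pos : forall k, 0 < eps k.
Hypothesis eps_geo : forall k, eps k.+1 *+ 2 <= eps k.

Lemma sum_split (w : K) l q : 0 <= w ->
  \sum_(j < q) (if (j < l)%N then w else eps j) <= w *+ l + eps l *+ 2.
Proof.
move=> w0.
have eps0 k : 0 <= eps k *+ 2 by rewrite mulrn_wge0 // ltW.
suff [h1 h2] : ((q <= l)%N -> \sum_(j < q) (if (j < l)%N then w else eps j) <= w *+ q) /\
   ((l <= q)%N -> \sum_(j < q) (if (j < l)%N then w else eps j) + eps q *+ 2
                  <= w *+ l + eps l *+ 2).
  case: (leqP q l) => ql.
    apply: le_trans (h1 ql) _; apply: le_trans (ler_wpMn2l w0 ql) _.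
    by rewrite lerDl.
  apply: le_trans (h2 (ltnW ql)); by rewrite lerDl.
elim: q => [|q [IH1 IH2]].
  rewrite big_ord0; split => // l0.
  by have -> : l = 0%N by lia.
have H1 : (q.+1 <= l)%N -> \sum_(j < q.+1) (if (j < l)%N then w else eps j) <= w *+ q.+1.
  move=> ql; rewrite big_ord_recr /= ql mulrSr lerD2r; apply: IH1; lia.
split => // lq.
case: (ltngtP l q.+1) lq => // [lq _|lq _].
  have lq' : (l <= q)%N by lia.
  rewrite big_ord_recr /= ltnNge lq' /=.
  apply: le_trans (IH2 lq').
  rewrite -addrA lerD2l [X in _ <= X]mulr2n lerD2l.
  exact: eps_geo.
subst l; rewrite lerD2r; exact: H1.
Qed.

Variable a : nat -> nat.
Hypothesis ha_tail : forall k i, (i <= k)%N -> forall s, uniq s ->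
  all (fun n => (a k < n)%N) s ->
  `|\sum_(n <- s) G i n| < eps k /\ `|\sum_(n <- s) H i n| < eps k.
Hypothesis hc_lt : forall j m, c m = Some j -> (a j < m /\ j < m)%N.
Hypothesis hc_sep : forall l j n m, c n = Some l -> c m = Some j -> n != m ->
  (a l < n - m + (m - n) /\ a j < n - m + (m - n))%N.

Definition u m := if c m is Some j then G j m else 0.

Lemma inner_bound l n j (r : seq nat) : c n = Some l -> uniq r -> n \notin r ->
  `|\sum_(m <- r | c m == Some j) iter n T (G j m)|
     <= (if (j < l)%N then eps l else eps j) *+ 2.
Proof.
move=> cn ur nr.
set k := if (j < l)%N then l else j.
have -> : (if (j < l)%N then eps l else eps j) = eps k by rewrite /k; case: ifP.
have jk : (j <= k)%N by rewrite /k; case: ifP => //; lia.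
have hk m : m \in r -> c m = Some j -> (a k < n - m + (m - n))%N.
  move=> mr cm; have nm : n != m by apply/eqP => E; subst; rewrite mr in nr.
  have := hc_sep _ _ _ _ cn cm nm; rewrite /k; case: ifP; lia.
rewrite (bigID (fun m => (n < m)%N)) /=.
apply: le_trans (ler_normD _ _) _; rewrite mulr2n; apply: lerD; apply: ltW.
- rewrite (eq_bigr (fun m => G j (m - n)%N)); last first.
    move=> m /andP [_ nm]; rewrite iterT_G (ltnW nm) //.
  rewrite -big_filter -(big_map (fun m => (m - n)%N) xpredT).
  have Us : uniq [seq (m - n)%N | m <- r & (c m == Some j) && (n < m)%N].
    rewrite map_inj_in_uniq ?filter_uniq // => x y.
    rewrite !mem_filter => /andP [/andP [_ hx] _] /andP [/andP [_ hy] _]; lia.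
  have As : all (fun x => (a k < x)%N) [seq (m - n)%N | m <- r & (c m == Some j) && (n < m)%N].
    apply/allP => x /mapP [m]; rewrite mem_filter => /andP [/andP [/eqP cm nm] mr] ->.
    have := hk m mr cm; lia.
  exact: (ha_tail _ _ jk _ Us As).1.
- rewrite (eq_bigr (fun m => H j (n - m)%N)); last first.
    move=> m /andP [_ nm]; rewrite iterT_G.
    case: ifP => // nm'; have -> : m = n by move: nm nm'; lia.
    by rewrite !subnn hGH0.
  rewrite -big_filter -(big_map (fun m => (n - m)%N) xpredT).
  have Us : uniq [seq (n - m)%N | m <- r & (c m == Some j) && ~~ (n < m)%N].
    rewrite map_inj_in_uniq ?filter_uniq // => x y.
    rewrite !mem_filter => /andP [/andP [_ hx] _] /andP [/andP [_ hy] _]; lia.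
  have As : all (fun x => (a k < x)%N) [seq (n - m)%N | m <- r & (c m == Some j) && ~~ (n < m)%N].
    apply/allP => x /mapP [m]; rewrite mem_filter => /andP [/andP [/eqP cm nm] mr] ->.
    have := hk m mr cm; lia.
  exact: (ha_tail _ _ jk _ Us As).2.
Qed.

Lemma block_bound p q (w : K) J0 : 0 <= w ->
  (forall j s, (j < J0)%N -> uniq s -> all (fun m => (p <= m)%N) s ->
     `|\sum_(m <- s) G j m| <= w) ->
  `|\sum_(p <= m < q) u m| <= w *+ J0 + eps J0 *+ 2.
Proof.
move=> w0 hw.
rewrite /u (group G (index_iota p q) q); last first.
  move=> m j; rewrite mem_index_iota => /andP [_ mq] /hc_lt; lia.
apply: le_trans (ler_norm_sum _ _ _) _.
apply: (le_trans _ (sum_split w J0 q w0)); apply: ler_sum => j _.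
rewrite -big_filter.
have Us : uniq [seq m <- index_iota p q | c m == Some (j : nat)].
  by rewrite filter_uniq // iota_uniq.
case: ifP => jJ.
  apply: hw => //; apply/allP => m; rewrite mem_filter mem_index_iota; lia.
apply: ltW; apply: (ha_tail _ _ (leqnn j) _ Us _).1.
apply/allP => m; rewrite mem_filter => /andP [/eqP /hc_lt [h _] _] //.
Qed.

Hypothesis hG_cauchy : forall i (e : K), 0 < e -> exists M, forall s, uniq s ->
  all (fun n => (M < n)%N) s -> `|\sum_(n <- s) G i n| < e.
Hypothesis eps_small : forall e : K, 0 < e -> exists J, eps J *+ 2 < e.

Lemma series_cvg : cvgn (series u).
Proof.
apply/cauchy_cvgP; apply/cauchy_seriesP => e e0.
have e20 : 0 < e / 2 by rewrite divr_gt0.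
have [J0 hJ0] := eps_small _ e20.
set w := e / 2 / J0.+1%:R.
have w0 : 0 < w by rewrite divr_gt0 // ltr0n.
pose M j := sval (cid (hG_cauchy j _ w0)).
have hM j := svalP (cid (hG_cauchy j _ w0)).
set p0 := (\max_(j < J0) M j)%N.
exists ([set n | (p0 < n)%N], [set n | (p0 < n)%N]); first by split; exists p0.+1.
case=> p q [/= hp hq].
apply: le_lt_trans (block_bound p q w J0 (ltW w0) _) _.
  move=> j s jJ Us As; apply: ltW; apply: hM => //.
  apply/allP => m ms; have /= pm := allP As m ms; move: hp => /= hp.
  have h : (M j <= p0)%N by exact: (@leq_bigmax _ (fun i : 'I_J0 => M i) (Ordinal jJ)).
  apply: (leq_ltn_trans h); exact: leq_trans hp pm.
have hw : w *+ J0 <= e / 2.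
  apply: le_trans (ler_wpMn2l (ltW w0) (leqnSn J0)) _.
  have -> : w *+ J0.+1 = w * J0.+1%:R by rewrite mulr_natr.
  by rewrite /w divfK // pnatr_eq0.
by rewrite [X in _ < X](splitr e); apply: ler_ltD.
Qed.

Lemma err_bound l n q : c n = Some l -> (n < q)%N ->
  `|G l 0 - iter n T (series u q)| <= eps l *+ (2 * l + 4).
Proof.
move=> cn nq.
rewrite /series /= iterT_sum (bigD1_seq n) /=; last by rewrite iota_uniq.
  2: by rewrite mem_index_iota.
have -> : iter n T (u n) = G l 0 by rewrite /u cn iterT_G leqnn subnn.
rewrite opprD addrA subrr add0r normrN.
rewrite -big_filter.
set r := [seq i <- index_iota 0 q | i != n].
rewrite (eq_bigr (fun i => if c i is Some j then iter n T (G j i) else 0)); last first.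
  by move=> i _; rewrite /u; case: (c i) => [j|] //; rewrite iterT0.
rewrite (group (fun j i => iter n T (G j i)) r q); last first.
  move=> m j; rewrite mem_filter mem_index_iota => /andP [_ /andP [_ mq]] /hc_lt; lia.
apply: le_trans (ler_norm_sum _ _ _) _.
have ur : uniq r by rewrite filter_uniq // iota_uniq.
have nr : n \notin r by rewrite mem_filter eqxx.
apply: (le_trans (y := \sum_(j < q) (if (j < l)%N then eps l else eps j) *+ 2)).
  by apply: ler_sum => j _; apply: inner_bound.
have -> : \sum_(j < q) (if (j < l)%N then eps l else eps j) *+ 2 =
          (\sum_(j < q) (if (j < l)%N then eps l else eps j)) *+ 2.
  by rewrite big_split /= -mulr2n.
apply: le_trans (ler_wMn2r 2 (sum_split (eps l) l q (ltW (eps_pos l)))) _.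
rewrite -mulrnDr -mulrnA; apply: ler_wpMn2l; first exact: ltW.
lia.
Qed.

Theorem core_thm : exists f : X, forall l n, c n = Some l ->
  forall r : K, eps l *+ (2 * l + 4) < r -> `|G l 0 - iter n T f| < r.
Proof.
exists (limn (series u)) => l n cn r hr.
set f := limn (series u).
set b := eps l *+ (2 * l + 4).
have [hb1 hb2] := midf_lt hr.
set b' := (b + r) / 2 in hb1 hb2.
have hT : (iter n T \o series u) x @[x --> \oo] --> iter n T f.
  apply: continuous_cvg; [exact: iterT_cont | exact: series_cvg].
have cl : closure (ball (G l 0) b') (iter n T f).
  apply: (closed_cvg _ (@closed_closure _ _) _ _ hT).
  exists n.+1 => // q /= hq; apply: subset_closure.
  rewrite -ball_normE /ball_ /=; apply: le_lt_trans hb1.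
  exact: err_bound.
have rb : 0 < r - b' by rewrite subr_gt0.
have [z [hz1 hz2]] := cl _ (nbhsx_ballx (iter n T f) _ rb).
move: hz1 hz2; rewrite -!ball_normE /ball_ /= => hz1 hz2.
apply: le_lt_trans (ler_distD z _ _) _.
rewrite -[r](subrK b') addrC; apply: ltrD => //.
by rewrite distrC.
Qed.
End Core.
Lemma arch_R (R : realType) (e : R) : 0 < e -> exists m : nat, (m.+1%:R)^-1 < e.
Proof.
move=> e0; have [N _ hN] := near_infty_natSinv_lt (PosNum e0).
by exists N; apply: (hN N) => /=.
Qed.

Lemma arch_scal (R : realType) (b : bool) (e : scal R b) :
  0 < e -> exists m : nat, (m.+1%:R)^-1 < e.
Proof.
case: b e => e; last exact: arch_R.
move: e; rewrite /scal /= => e e0.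
have er : e = (complex.Re e)%:C%C by rewrite RRe_real // gtr0_real.
have Re0 : 0 < complex.Re e by move: e0; rewrite ltcE => /andP [].
have [m hm] := arch_R _ _ Re0.
exists m.
rewrite er -(rmorph_nat (real_complex R)) -fmorphV ltcR //.
Qed.

Section Eps.
Variable K : numFieldType.

Lemma frac_le (A B C D : nat) : (0 < A)%N -> (0 < B)%N -> (C * B <= D * A)%N ->
  (C%:R / A%:R : K) <= D%:R / B%:R.
Proof.
move=> A0 B0 h.
rewrite ler_pdivrMr ?ltr0n // mulrAC ler_pdivlMr ?ltr0n // -!natrM ler_nat.
by [].
Qed.

Lemma frac_lt (A B C D : nat) : (0 < A)%N -> (0 < B)%N -> (C * B < D * A)%N ->
  (C%:R / A%:R : K) < D%:R / B%:R.
Proof.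
move=> A0 B0 h.
rewrite ltr_pdivrMr ?ltr0n // mulrAC ltr_pdivlMr ?ltr0n // -!natrM ltr_nat.
by [].
Qed.

Lemma inv_nat (B : nat) : (B%:R^-1 : K) = 1%:R / B%:R.
Proof. by rewrite div1r. Qed.

Lemma inv_le (m n : nat) : (m <= n)%N -> ((n.+1%:R)^-1 : K) <= (m.+1%:R)^-1.
Proof. move=> mn; rewrite lef_pV2 ?posrE ?ltr0n ?ltn0Sn // ler_nat ltnS //. Qed.

Definition epsd (k : nat) : nat := 4 * k.+1 * k.+2 * 2 ^ k.
Definition epsf k : K := (epsd k)%:R^-1.

Lemma epsd_pos k : (0 < epsd k)%N.
Proof. by rewrite /epsd !muln_gt0 expn_gt0. Qed.

Lemma epsfMn k n : epsf k *+ n = n%:R / (epsd k)%:R.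
Proof. by rewrite /epsf mulrC mulr_natr. Qed.

Lemma epsf_pos k : 0 < epsf k.
Proof. by rewrite /epsf invr_gt0 ltr0n epsd_pos. Qed.

Lemma epsf_geo k : epsf k.+1 *+ 2 <= epsf k.
Proof.
rewrite !epsfMn -[epsf k]mulr1n epsfMn; apply: frac_le; rewrite ?epsd_pos //.
rewrite /epsd expnS; nia.
Qed.

Lemma epsf_rad l : epsf l *+ (2 * l + 4) < (l.+1%:R)^-1.
Proof.
rewrite epsfMn [X in _ < X]inv_nat; apply: frac_lt; rewrite ?epsd_pos //.
rewrite /epsd; have := expn_gt0 2 l; nia.
Qed.

Lemma epsf_small : (forall e : K, 0 < e -> exists m : nat, (m.+1%:R)^-1 < e) ->
  forall e : K, 0 < e -> exists J, epsf J *+ 2 < e.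
Proof.
move=> arch e e0; have [m hm] := arch e e0; exists m.
apply: le_lt_trans hm; rewrite epsfMn [X in _ <= X]inv_nat; apply: frac_le; rewrite ?epsd_pos //.
rewrite /epsd; have := expn_gt0 2 m; nia.
Qed.
End Eps.

Theorem corollary2p3 (R : realType) (b : bool)
    (X : completeNormedModType (scal R b))
    (D : set X) (A : X -> X) (X0 : set X) (B : X -> X)
    (Ainv : {linear X -> X}) :
  infinite_dimensional X ->
  separable_space X ->
  linear_operator D A ->
  dense D ->
  (forall r : nat, (1 <= r)%N -> closed_operator (dom_pow D A r) (iter r A)) ->
  dense X0 ->
  (forall x, X0 x -> forall n : nat, dom_pow D A n x) ->
  (forall x, X0 x -> X0 (B x)) ->
  (forall x, X0 x -> A (B x) = x) ->
  (forall x, X0 x -> uncond_conv (fun n => iter n A x)) ->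
  (forall x, X0 x -> uncond_conv (fun n => iter n B x)) ->
  (forall x y, D x -> D y -> A x = A y -> x = y) ->
  continuous Ainv ->
  (forall y, D (Ainv y) /\ A (Ainv y) = y) ->
  (forall x, D x -> Ainv (A x) = x) ->
  freq_hypercyclic R setT Ainv.
Proof.
move=> _ [S [cS dS]] _ _ _ dX0 hdom hB hAB hAu hBu _ Ac _ hAinv2.
move/countable_injP: cS => [fi fiinj].
pose s (k : nat) : X :=
  if pselect (exists x, S x /\ fi x = k) is left h then sval (cid h) else 0.
have hs (x : X) (e : scal R b) : 0 < e -> exists i, `|x - s i| < e.
  move=> e0.
  have [z [hz1 hz2]] := dS (ball x e) (ex_intro _ x (ballxx x e0)) (ball_open x e).
  exists (fi z); rewrite /s; case: pselect => [h|h]; last first.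
    by exfalso; apply: h; exists z.
  have [Sz' fz'] := svalP (cid h).
  have -> : sval (cid h) = z by apply: fiinj; rewrite ?inE.
  by move: hz1; rewrite -ball_normE.
pose d j := logn 2 j.
pose rho j : scal R b := (j.+1%:R)^-1.
have rho0 j : 0 < rho j by rewrite invr_gt0 ltr0n.
have hy j : exists y, X0 y /\ `|s (d j) - y| < rho j.
  have [z [hz1 hz2]] := dX0 (ball (s (d j)) (rho j))
     (ex_intro _ _ (ballxx (s (d j)) (rho0 j))) (ball_open _ _).
  by exists z; split => //; move: hz1; rewrite -ball_normE.
pose y j := sval (cid (hy j)).
have [hyX0 hyd] : (forall j, X0 (y j)) /\ (forall j, `|s (d j) - y j| < rho j).
  by split => j; have [] := svalP (cid (hy j)).
pose G i k := iter k A (y i).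
pose H i k := iter k B (y i).
have hGT i k : Ainv (G i k.+1) = G i k.
  rewrite /G iterS hAinv2 //; exact: (hdom _ (hyX0 i) k.+1 k (ltnSn k)).
have iterB_X0 i k : X0 (iter k B (y i)).
  elim: k => [|k IH] /=; [exact: hyX0 | exact: hB].
have hHT i k : Ainv (H i k) = H i k.+1.
  rewrite /H iterS; set z := iter k B (y i).
  have Xz : X0 z by exact: iterB_X0.
  rewrite -{1}(hAB z Xz) hAinv2 //.
  exact: (hdom _ (hB z Xz) 1 0 (ltn0Sn 0)).
have hGH0 i : G i 0%N = H i 0%N by [].
pose eps := @epsf (scal R b).
have eps_pos k : 0 < eps k by apply: epsf_pos.
pose NG i k := sval (cid (hAu (y i) (hyX0 i) (eps k) (eps_pos k))).
pose NH i k := sval (cid (hBu (y i) (hyX0 i) (eps k) (eps_pos k))).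
pose a k := (\max_(i < k.+1) (NG i k + NH i k) + k)%N.
have ha_tail k i : (i <= k)%N -> forall s, uniq s -> all (fun n => (a k < n)%N) s ->
    `|\sum_(n <- s) G i n| < eps k /\ `|\sum_(n <- s) H i n| < eps k.
  move=> ik s0 us als.
  have hle : (NG i k + NH i k <= \max_(i < k.+1) (NG i k + NH i k))%N.
    exact: (@leq_bigmax _ (fun i : 'I_k.+1 => (NG i k + NH i k)%N) (Ordinal (ik : (i < k.+1)%N))).
  split.
  - apply: (svalP (cid (hAu (y i) (hyX0 i) (eps k) (eps_pos k)))) => //.
    apply/allP => n ns; have /= := allP als n ns; rewrite /a /=.
    move: hle => h1 h2; apply: (leq_ltn_trans _ h2).
    apply: (leq_trans _ (leq_addr k _)); exact: (leq_trans (leq_addr _ _) h1).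
  - apply: (svalP (cid (hBu (y i) (hyX0 i) (eps k) (eps_pos k)))) => //.
    apply/allP => n ns; have /= := allP als n ns; rewrite /a /=.
    move: hle => h1 h2; apply: (leq_ltn_trans _ h2).
    apply: (leq_trans _ (leq_addr k _)); exact: (leq_trans (leq_addl _ _) h1).
have hG_cauchy i (e : scal R b) : 0 < e -> exists M, forall s, uniq s ->
    all (fun n => (M < n)%N) s -> `|\sum_(n <- s) G i n| < e.
  by move=> e0; apply: (hAu (y i) (hyX0 i) e e0).
pose c n := if pselect (exists j, Bset a j n) is left h then Some (sval (cid h)) else None.
have cB n j : c n = Some j -> Bset a j n.
  rewrite /c; case: pselect => // h [<-]; exact: svalP (cid h).
have Bc n j : Bset a j n -> c n = Some j.
  move=> Bj; rewrite /c; case: pselect => [h|h]; last by exfalso; apply: h; exists j.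
  congr Some; exact: (B_disj _ _ _ _ (svalP (cid h)) Bj).
have hc_lt j m : c m = Some j -> (a j < m /\ j < m)%N.
  by move/cB/B_lt.
have hc_sep l j n m : c n = Some l -> c m = Some j -> n != m ->
    (a l < n - m + (m - n) /\ a j < n - m + (m - n))%N.
  by move=> /cB hl /cB hj nm; exact: (B_sep _ _ _ _ _ hl hj nm).
have eps_small := @epsf_small _ (@arch_scal R b).
have [f hf] := @core_thm (scal R b) X Ainv Ac G H hGT hHT hGH0 c eps eps_pos
  (@epsf_geo _) a ha_tail hc_lt hc_sep hG_cauchy eps_small.
exists f; split => //; split => // U oU [x Ux].
have : nbhs x U by apply: open_nbhs_nbhs; split.
move/nbhs_ballP => [e e0 hU].
have e30 : 0 < e / 3%:R by rewrite divr_gt0 // ltr0n.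
have [i hi] := hs x _ e30.
have [m hm] := @arch_scal R b _ e30.
pose j := ((2 * m + 1) * 2 ^ i)%N.
have dj : d j = i.
  have cop : coprime 2 (2 * m + 1).
    by rewrite coprime2n addn1 oddS oddM.
  rewrite /d /j (logn_Gauss _ cop) pfactorK //.
have mj : (m <= j)%N.
  by rewrite /j; apply: (leq_trans _ (leq_pmulr _ (expn_gt0 2 i))); lia.
have rhoj : rho j < e / 3%:R by apply: (le_lt_trans _ hm); exact: inv_le.
have hE n : Bset a j n -> U (iter n Ainv f).
  move=> Bn; apply: hU; rewrite -ball_normE /ball_ /=.
  have h1 := hf j n (Bc _ _ Bn) (rho j) (epsf_rad _ j).
  have h2 := hyd j; rewrite dj in h2.
  apply: le_lt_trans (ler_distD (s i) _ _) _.
  apply: (@lt_le_trans _ _ (e / 3%:R + (e / 3%:R + e / 3%:R))).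
    apply: ltrD => //; apply: le_lt_trans (ler_distD (y j) _ _) _.
    by apply: ltrD; apply: lt_trans rhoj.
  rewrite -mulr2n -mulrS.
  have -> : e / 3%:R *+ 3 = e / 3%:R * 3%:R by rewrite mulr_natr.
  by rewrite divfK // pnatr_eq0.
apply: (@dens_pos R _ (8 * P a j) (4 * P a j)).
  by rewrite muln_gt0 P_pos.
move=> N hN; apply: leq_trans (B_dens a j N hN) _.
rewrite leq_mul2l; apply/orP; right.
apply: leq_sum => n _.
case: (pselect (Bset a j n)) => h; last by rewrite (asboolF h).
by rewrite (asboolT h) (asboolT (hE n h)).
Qed.
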